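(* Let $T:\mathbf{Set}\to\mathbf{Set}$ be a functor, let $\lambda/n$ and $\lambda'/n'$ be monotone singleton-preserving predicate liftings for $T$, let $S$ be an equivalence relation on a set $X$, let $A_1,\dots,A_n\subseteq X$ each be an $S$-equivalence class or empty, and let $B_1,\dots,B_{n'}\subseteq X$ be $S$-closed (unions of $S$-equivalence classes). Then: (1) $\lambda_X(A_1,\dots,A_n)\subseteq\lambda'_X(B_1,\dots,B_{n'})$ or $\lambda_X(A_1,\dots,A_n)\cap\lambda'_X(B_1,\dots,B_{n'})=\varnothing$. (2) If moreover each $B_j$ is an $S$-equivalence class or empty, then $\lambda_X(A_1,\dots,A_n)=\lambda'_X(B_1,\dots,B_{n'})$ or $\lambda_X(A_1,\dots,A_n)\cap\lambda'_X(B_1,\dots,B_{n'})=\varnothing$.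
   Context: An $n$-ary predicate lifting for $T$ is a family $\lambda_X:(\mathcal{P}X)^n\to\mathcal{P}(TX)$ natural w.r.t. preimages: $\lambda_X(f^{-1}[A_1],\dots,f^{-1}[A_n])=(Tf)^{-1}[\lambda_Y(A_1,\dots,A_n)]$ for every $f:X\to Y$ and $A_i\subseteq Y$. It is monotone if each $\lambda_X$ is monotone w.r.t. inclusion in every argument, and preserves singletons if $|\lambda_X(\{x_1\},\dots,\{x_n\})|=1$ for all sets $X$ and $x_1,\dots,x_n\in X$. *)

(* Defs.v *)
From mathcomp Require Import all_boot.
Set Implicit Arguments.
Unset Strict Implicit.
Unset Printing Implicit Defensive.

Definition set_subset {X : Type} (A B : X -> Prop) : Prop := forall x, A x -> B x.
Definition set_eq {X : Type} (A B : X -> Prop) : Prop := forall x, A x <-> B x.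
Definition set_disjoint {X : Type} (A B : X -> Prop) : Prop := forall x, ~ (A x /\ B x).
Definition set_preimage {X Y : Type} (f : X -> Y) (A : Y -> Prop) : X -> Prop :=
  fun x => A (f x).
Definition set_singleton {X : Type} (x : X) : X -> Prop := fun y => y = x.

Definition is_functor (T : Type -> Type)
    (fmap : forall X Y : Type, (X -> Y) -> T X -> T Y) : Prop :=
  (forall (X : Type) (t : T X), fmap X X (fun x => x) t = t) /\
  (forall (X Y Z : Type) (f : X -> Y) (g : Y -> Z) (t : T X),
      fmap X Z (fun x => g (f x)) t = fmap Y Z g (fmap X Y f t)).

Definition predicate_lifting (T : Type -> Type)
    (fmap : forall X Y : Type, (X -> Y) -> T X -> T Y) (n : nat)
    (lam : forall X : Type, ('I_n -> X -> Prop) -> T X -> Prop) : Prop :=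
  forall (X Y : Type) (f : X -> Y) (A : 'I_n -> Y -> Prop),
    set_eq (lam X (fun i => set_preimage f (A i)))
           (set_preimage (fmap X Y f) (lam Y A)).

Definition lifting_monotone (T : Type -> Type) (n : nat)
    (lam : forall X : Type, ('I_n -> X -> Prop) -> T X -> Prop) : Prop :=
  forall (X : Type) (A B : 'I_n -> X -> Prop),
    (forall i, set_subset (A i) (B i)) -> set_subset (lam X A) (lam X B).

Definition preserves_singletons (T : Type -> Type) (n : nat)
    (lam : forall X : Type, ('I_n -> X -> Prop) -> T X -> Prop) : Prop :=
  forall (X : Type) (x : 'I_n -> X),
    exists t : T X, forall u, lam X (fun i => set_singleton (x i)) u <-> u = t.

Definition is_equiv_relation {X : Type} (S : X -> X -> Prop) : Prop :=
  (forall x, S x x) /\ (forall x y, S x y -> S y x) /\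
  (forall x y z, S x y -> S y z -> S x z).

Definition S_equiv_class {X : Type} (S : X -> X -> Prop) (A : X -> Prop) : Prop :=
  exists x, forall y, A y <-> S x y.

Definition is_empty_set {X : Type} (A : X -> Prop) : Prop := forall x, ~ A x.

Definition S_closed {X : Type} (S : X -> X -> Prop) (A : X -> Prop) : Prop :=
  forall x y, S x y -> A x -> A y.

(* Main.v *)
Require Import Defs.
From mathcomp Require Import all_boot.
From Stdlib Require Import Classical FunctionalExtensionality PropExtensionality.

Section Aux.
Variable (X : Type) (S : X -> X -> Prop) (HS : is_equiv_relation S).

Lemma cls_eq x y : S x y -> S x = S y.
Proof.
case: HS => r [s tr] h; apply: functional_extensionality => z.
apply: propositional_extensionality; split => H; eauto.
Qed.

Definition liftC (A : X -> Prop) : (X -> Prop) -> Prop :=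
  fun P => exists x, A x /\ P = S x.

Lemma pre_closed A : S_closed S A ->
  set_eq (set_preimage (fun x => S x) (liftC A)) A.
Proof.
case: HS => r [s tr] hc y; split.
- case=> x [Ax E]. have : S y x by rewrite E; apply: r.
  move=> Syx; exact: hc _ _ (s _ _ Syx) Ax.
- move=> Ay; exists y; split => //.
Qed.

Lemma class_closed A : S_equiv_class S A \/ is_empty_set A -> S_closed S A.
Proof.
case: HS => r [s tr] [[x0 h]|h] x y Sxy Ax.
- apply/h; apply: tr _ _ _ _ Sxy; exact/h.
- by case: (h x).
Qed.

Definition pt (A : X -> Prop) : X -> Prop := fun y => exists x, A x /\ S x y.

Lemma liftC_single A : S_equiv_class S A \/ is_empty_set A ->
  forall P, liftC A P -> P = pt A.
Proof.
case: HS => r [s tr] [[x0 h]|h] P [x [Ax E]]; last by case: (h x).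
rewrite E.
apply: functional_extensionality => y; apply: propositional_extensionality.
split; first by move=> Sxy; exists x.
case=> x' [Ax' Sx'y]. have h1 := proj1 (h x) Ax. have h2 := proj1 (h x') Ax'.
apply: (tr _ _ _ _ Sx'y); exact: (tr _ _ _ (s _ _ h1) h2).
Qed.
End Aux.
Arguments liftC {X} S A _.
Arguments pt {X} S A _.
Arguments cls_eq {X S} HS {x y}.
Arguments pre_closed {X S} HS {A}.
Arguments class_closed {X S} HS {A}.
Arguments liftC_single {X S} HS {A}.

Lemma core (TX TQ : Type) (g : TX -> TQ) (U V : TX -> Prop) (U' V' : TQ -> Prop)
  (t : TQ) (hU : set_eq U (set_preimage g U')) (hV : set_eq V (set_preimage g V'))
  (ht : forall u, U' u -> u = t) :
  (set_subset U V \/ set_disjoint U V) /\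
  ((forall v, V' v -> exists t', forall w, V' w -> w = t') ->
     set_eq U V \/ set_disjoint U V).
Proof.
split.
- case: (classic (V' t)) => Vt.
  + left => x /hU /= Ux; apply/hV; rewrite /set_preimage (ht _ Ux) //.
  + right => x [/hU Ux /hV Vx]; apply: Vt; rewrite -(ht _ Ux) //.
- move=> hV1.
  case: (classic (exists x, U x /\ V x)) => [[x [Ux Vx]]|nE]; last first.
    by right => x H; apply: nE; exists x.
  move/hU: Ux => /= Ux; move/hV: Vx => /= Vx.
  have [t' ht'] := hV1 _ Vx.
  have E : t = t' by rewrite -(ht _ Ux) (ht' _ Vx).
  left => y; split.
  + move/hU => /= Uy; apply/hV; rewrite /set_preimage (ht _ Uy) E -(ht' _ Vx) //.
  + move/hV => /= Vy; apply/hU; rewrite /set_preimage (ht' _ Vy) -E -(ht _ Ux) //.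
Qed.

Lemma mon_eq (T : Type -> Type) (n : nat)
    (lam : forall X : Type, ('I_n -> X -> Prop) -> T X -> Prop)
    (Hmon : lifting_monotone lam) X (A B : 'I_n -> X -> Prop) :
  (forall i, set_eq (A i) (B i)) -> set_eq (lam X A) (lam X B).
Proof.
move=> h u; split; apply: Hmon => i x; move: (h i x); tauto.
Qed.

Theorem mainTheorem5
    (T : Type -> Type) (fmap : forall X Y : Type, (X -> Y) -> T X -> T Y)
    (HT : is_functor fmap)
    (n n' : nat)
    (lam : forall X : Type, ('I_n -> X -> Prop) -> T X -> Prop)
    (lam' : forall X : Type, ('I_n' -> X -> Prop) -> T X -> Prop)
    (Hlam : predicate_lifting fmap lam) (Hmon : lifting_monotone lam)
    (Hsing : preserves_singletons lam)
    (Hlam' : predicate_lifting fmap lam') (Hmon' : lifting_monotone lam')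
    (Hsing' : preserves_singletons lam')
    (X : Type) (S : X -> X -> Prop) (HS : is_equiv_relation S)
    (A : 'I_n -> X -> Prop) (B : 'I_n' -> X -> Prop)
    (HA : forall i, S_equiv_class S (A i) \/ is_empty_set (A i))
    (HB : forall j, S_closed S (B j)) :
  (set_subset (lam X A) (lam' X B) \/ set_disjoint (lam X A) (lam' X B)) /\
  ((forall j, S_equiv_class S (B j) \/ is_empty_set (B j)) ->
     set_eq (lam X A) (lam' X B) \/ set_disjoint (lam X A) (lam' X B)).
Proof.
set f := fun x : X => S x.
set C := fun i => liftC S (A i).
set D := fun j => liftC S (B j).
have hU : set_eq (lam X A) (set_preimage (fmap _ _ f) (lam _ C)).
  move=> u; rewrite -(Hlam _ _ f C u).
  apply: (@mon_eq T n lam Hmon) => i y; apply: iff_sym; exact: (pre_closed HS (class_closed HS (HA i))).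
have hV : set_eq (lam' X B) (set_preimage (fmap _ _ f) (lam' _ D)).
  move=> u; rewrite -(Hlam' _ _ f D u).
  apply: (@mon_eq T n' lam' Hmon') => j y; apply: iff_sym; exact: (pre_closed HS (HB j)).
have [t ht] := Hsing _ (fun i => pt S (A i)).
have ht2 : forall u, lam _ C u -> u = t.
  move=> u Cu; apply/ht; move: Cu; apply: Hmon => i P /=.
  exact: (liftC_single HS (HA i)).
have [H1 H2] := @core _ _ _ _ _ _ _ _ hU hV ht2.
split => // HB2; apply: H2 => v _.
have [t' ht'] := Hsing' _ (fun j => pt S (B j)).
exists t' => w Dw; apply/ht'; move: Dw; apply: Hmon' => j P /=.
exact: (liftC_single HS (HB2 j)).
Qed.
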